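(* There exists a disconnected biconvex bipartite graph that is not an induced subgraph of any connected biconvex bipartite graph.
   Context: A bipartite graph $G=(A\cup B,E)$ is biconvex if there are orderings of $A$ and of $B$ such that for every $a\in A$ the neighborhood $N(a)$ is a set of consecutive vertices in the ordering of $B$, and for every $b\in B$ the neighborhood $N(b)$ is a set of consecutive vertices in the ordering of $A$. *)

(* Defs.v *)
From mathcomp Require Import all_boot.
Set Implicit Arguments. Unset Strict Implicit. Unset Printing Implicit Defensive.

Definition badj (A B : finType) (E : A -> B -> bool) : rel (A + B)%type :=
  fun x y =>
    match x, y with
    | inl a, inr b => E a b
    | inr b, inl a => E a b
    | _, _ => false
    end.

(* S is a set of consecutive elements w.r.t. the linear order on T given by
   the injective ranking ord : T -> nat. *)
Definition consecutive (T : finType) (ord : T -> nat) (S : pred T) : Prop :=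
  forall x y z : T, S x -> S z -> ord x <= ord y <= ord z -> S y.

Definition biconvex (A B : finType) (E : A -> B -> bool) : Prop :=
  exists (ordA : A -> nat) (ordB : B -> nat),
    injective ordA /\ injective ordB /\
    (forall a : A, consecutive ordB (fun b => E a b)) /\
    (forall b : B, consecutive ordA (fun a => E a b)).

Definition bconnected (A B : finType) (E : A -> B -> bool) : Prop :=
  forall x y : (A + B)%type, connect (badj E) x y.

Definition induced_subgraph (A B : finType) (E : A -> B -> bool)
    (A' B' : finType) (E' : A' -> B' -> bool) : Prop :=
  exists f : (A + B)%type -> (A' + B')%type,
    injective f /\ forall x y, badj E' (f x) (f y) = badj E x y.

(* Main.v *)
Require Import Defs.
From mathcomp Require Import all_boot zify.
Set Implicit Arguments. Unset Strict Implicit. Unset Printing Implicit Defensive.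

Definition out (p y q : nat) := ~ (p <= y /\ y <= q) /\ ~ (q <= y /\ y <= p).
Lemma arith1 (u0 u2 v1 v3 x2 s : nat) :
  out u0 v3 u2 -> out u0 v3 v1 -> out u2 v3 v1 ->
  out u0 x2 u2 -> out u0 x2 v1 -> out u2 x2 v1 ->
  out u0 v1 u2 -> out u0 v1 v3 -> out u2 v1 v3 ->
  out u0 x2 v3 -> out u2 x2 v3 ->
  out x2 v1 s -> out x2 v3 s -> (s = u0 \/ s = u2) ->
  u0 <> u2 -> u0 <> v1 -> u0 <> v3 -> u0 <> x2 -> u2 <> v1 -> u2 <> v3 -> u2 <> x2 ->
  v1 <> v3 -> v1 <> x2 -> v3 <> x2 -> False.
Proof. rewrite /out. lia. Qed.
Lemma arith2 (u1 u3 v0 v2 x1 x3 : nat) :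
  out u1 v2 u3 -> out u1 v2 v0 -> out u3 v2 v0 ->
  out u1 x3 u3 -> out u1 x3 v0 -> out u3 x3 v0 ->
  out u1 v0 u3 -> out u1 v0 v2 -> out u3 v0 v2 ->
  out u1 x3 v2 -> out u3 x3 v2 ->
  out x1 u1 x3 -> out x1 u3 x3 -> out x1 v0 x3 -> out x1 v2 x3 ->
  out u1 v0 x1 -> out u1 v2 x1 -> out u1 u3 x1 ->
  u1 <> u3 -> u1 <> v0 -> u1 <> v2 -> u1 <> x1 -> u1 <> x3 -> u3 <> v0 -> u3 <> v2 -> u3 <> x1 -> u3 <> x3 ->
  v0 <> v2 -> v0 <> x1 -> v0 <> x3 -> v2 <> x1 -> v2 <> x3 -> x1 <> x3 -> False.
Proof. rewrite /out. lia. Qed.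

Section Core.
Variables (V : Type) (adj : V -> V -> bool) (sd : V -> bool) (ord : V -> nat).
Hypothesis Hc : forall v x y z, sd x = sd y -> sd y = sd z -> adj v x -> adj v z ->
  ord x <= ord y <= ord z -> adj v y.
Hypothesis Hi : forall x y, sd x = sd y -> ord x = ord y -> x = y.
Hypothesis Hs : forall x y, adj x y -> sd x <> sd y.
Hypothesis Hsym : forall x y, adj x y = adj y x.

Lemma outside v p y q c : adj v p -> adj v q -> ~~ adj v y ->
  sd p = c -> sd y = c -> sd q = c -> out (ord p) (ord y) (ord q).
Proof.
move=> hp hq hy sp sy sq; split=> -[h1 h2].
  by move: hy; rewrite (Hc (etrans sp (esym sy)) (etrans sy (esym sq)) hp hq) ?h1 ?h2.
by move: hy; rewrite (Hc (etrans sq (esym sy)) (etrans sy (esym sp)) hq hp) ?h1 ?h2.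
Qed.

Lemma dist a b w c : adj a w -> ~~ adj b w -> sd a = c -> sd b = c -> ord a <> ord b.
Proof.
move=> ha hb sa sb e; have eab := Hi (etrans sa (esym sb)) e.
by move: hb; rewrite -eab ha.
Qed.

Lemma side_opp x y : adj x y -> sd y = ~~ sd x.
Proof. by move=> /Hs; case: (sd x); case: (sd y). Qed.

Variables (u0 u1 u2 u3 v0 v1 v2 v3 x1 x2 x3 : V).
Hypotheses (e01 : adj u0 u1) (e12 : adj u1 u2) (e23 : adj u2 u3) (e30 : adj u3 u0)
  (f0 : adj u0 v0) (f1 : adj u1 v1) (f2 : adj u2 v2) (f3 : adj u3 v3).
Hypotheses (n13 : ~~ adj u1 v3) (n31 : ~~ adj u3 v1) (n02 : ~~ adj u0 v2) (n20 : ~~ adj u2 v0)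
  (m10 : ~~ adj v1 v0) (m12 : ~~ adj v1 v2) (m30 : ~~ adj v3 v0) (m32 : ~~ adj v3 v2).
Hypotheses (hx1 : [|| adj x1 u0, adj x1 u2, adj x1 v1 | adj x1 v3])
  (h12 : adj x1 x2) (h23 : adj x2 x3).
Hypotheses (a0 : ~~ adj x2 u0) (a1 : ~~ adj x2 u1) (a2 : ~~ adj x2 u2) (a3 : ~~ adj x2 u3)
  (a4 : ~~ adj x2 v0) (a5 : ~~ adj x2 v1) (a6 : ~~ adj x2 v2) (a7 : ~~ adj x2 v3).
Hypotheses (b0 : ~~ adj x3 u0) (b1 : ~~ adj x3 u1) (b2 : ~~ adj x3 u2) (b3 : ~~ adj x3 u3)
  (b4 : ~~ adj x3 v0) (b5 : ~~ adj x3 v1) (b6 : ~~ adj x3 v2) (b7 : ~~ adj x3 v3).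

Ltac ad := first [ done | rewrite Hsym; done ].
Ltac tryv t := first [ t u0 | t u1 | t u2 | t u3 | t v0 | t v1 | t v2 | t v3 | t x1 | t x2 | t x3 ].
Ltac so1 w := apply: (outside (v:=w)); [ad|ad|ad|eassumption|eassumption|eassumption].
Ltac so := tryv so1.
Ltac di1 w := apply: (dist (w:=w)); [ad|ad|eassumption|eassumption].
Ltac di2 w := first [ di1 w | apply: nesym; di1 w ].
Ltac di := tryv di2.

Lemma core_false : False.
Proof.
have [al s0] : exists al, sd u0 = al by eexists.
have s1 : sd u1 = ~~ al by rewrite (side_opp e01) s0.
have s2 : sd u2 = al by rewrite (side_opp e12) s1 negbK.
have s3 : sd u3 = ~~ al by rewrite (side_opp e23) s2.
have sv0 : sd v0 = ~~ al by rewrite (side_opp f0) s0.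
have sv1 : sd v1 = al by rewrite (side_opp f1) s1 negbK.
have sv2 : sd v2 = ~~ al by rewrite (side_opp f2) s2.
have sv3 : sd v3 = al by rewrite (side_opp f3) s3 negbK.
have sx1 : sd x1 = ~~ al.
  by case/or4P: hx1 => /side_opp; rewrite ?s0 ?s2 ?sv1 ?sv3; case: (sd x1); case: (al).
have sx2 : sd x2 = al by rewrite (side_opp h12) sx1 negbK.
have sx3 : sd x3 = ~~ al by rewrite (side_opp h23) sx2.
have C2 : ~ adj x1 v1 /\ ~ adj x1 v3.
  split=> h.
    by apply: (arith2 (u1:=ord u1) (u3:=ord u3) (v0:=ord v0) (v2:=ord v2) (x1:=ord x1) (x3:=ord x3)); [so|so|so|so|so|so|so|so|so|so|so|so|so|so|so|so|so|so|di|di|di|di|di|di|di|di|di|di|di|di|di|di|di].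
  by apply: (arith2 (u1:=ord u3) (u3:=ord u1) (v0:=ord v0) (v2:=ord v2) (x1:=ord x1) (x3:=ord x3)); [so|so|so|so|so|so|so|so|so|so|so|so|so|so|so|so|so|so|di|di|di|di|di|di|di|di|di|di|di|di|di|di|di].
case: C2 => c1 c3.
have nv1 : ~~ adj x1 v1 by apply/negP.
have nv3 : ~~ adj x1 v3 by apply/negP.
case/or4P: hx1 => h; last 2 first; [by [] | by [] | |].
  by apply: (arith1 (u0:=ord u0) (u2:=ord u2) (v1:=ord v1) (v3:=ord v3) (x2:=ord x2) (s:=ord u0)); [so|so|so|so|so|so|so|so|so|so|so|so|so|by left|di|di|di|di|di|di|di|di|di|di].
by apply: (arith1 (u0:=ord u0) (u2:=ord u2) (v1:=ord v1) (v3:=ord v3) (x2:=ord x2) (s:=ord u2)); [so|so|so|so|so|so|so|so|so|so|so|so|so|by right|di|di|di|di|di|di|di|di|di|di].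
Qed.
End Core.

Definition GE (a b : 'I_5) : bool :=
  (nat_of_ord a, nat_of_ord b) \in [:: (0,0);(0,1);(1,0);(1,1);(0,2);(1,3);(2,0);(3,1);(4,4)].
Definition gord (i : 'I_5) : nat := nth 0 [:: 1;2;0;3;4] i.

Lemma gord_inj : injective gord.
Proof. by move=> [[|[|[|[|[|?]]]]] ?] [[|[|[|[|[|?]]]]] ?] //= _; apply/val_inj. Qed.

Lemma G_bic : biconvex GE.
Proof.
exists gord, gord; split; first exact: gord_inj. split; first exact: gord_inj.
split.
  move=> [[|[|[|[|[|?]]]]] ?] [[|[|[|[|[|?]]]]] ?] [[|[|[|[|[|?]]]]] ?] [[|[|[|[|[|?]]]]] ?] //.
move=> [[|[|[|[|[|?]]]]] ?] [[|[|[|[|[|?]]]]] ?] [[|[|[|[|[|?]]]]] ?] [[|[|[|[|[|?]]]]] ?] //.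
Qed.

Lemma cross (T : finType) (e : rel T) (P : pred T) x y :
  connect e x y -> P x -> ~~ P y -> exists a b, [/\ P a, ~~ P b & e a b].
Proof.
case/connectP=> p; elim: p x => [|z p IH] x /=.
  by move=> _ -> ->.
case/andP=> exz pz ly Px nPy.
case Pz: (P z); first exact: IH pz ly Pz nPy.
by exists x, z; rewrite Pz.
Qed.

Definition inK (k : ('I_5 + 'I_5)%type) : bool :=
  match k with inl i => nat_of_ord i < 4 | inr i => nat_of_ord i < 4 end.

Lemma inK_closed x y : badj GE x y -> inK x = inK y.
Proof.
by case: x y => [[[|[|[|[|[|?]]]]] ?]|[[|[|[|[|[|?]]]]] ?]] [[[|[|[|[|[|?]]]]] ?]|[[|[|[|[|[|?]]]]] ?]].
Qed.

Definition w4 : 'I_5 := @Ordinal 5 4 isT.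
Definition i0 : 'I_5 := @Ordinal 5 0 isT.
Definition i1 : 'I_5 := @Ordinal 5 1 isT.
Definition i2 : 'I_5 := @Ordinal 5 2 isT.
Definition i3 : 'I_5 := @Ordinal 5 3 isT.

Lemma G_ncon : ~ bconnected GE.
Proof.
move=> hc; have := cross (P := inK) (hc (inl i0) (inl w4)) isT isT.
by case=> a [b [Pa nPb /inK_closed eab]]; move: nPb; rewrite -eab Pa.
Qed.

Lemma K_w4 k : inK k -> badj GE k (inl w4) = false /\ badj GE k (inr w4) = false.
Proof. by case: k => [[[|[|[|[|[|?]]]]] ?]|[[|[|[|[|[|?]]]]] ?]]. Qed.

Theorem proposition1 :
  exists (A B : finType) (E : A -> B -> bool),
    biconvex E /\ ~ bconnected E /\
    forall (A' B' : finType) (E' : A' -> B' -> bool),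
      biconvex E' -> bconnected E' -> ~ induced_subgraph E E'.
Proof.
exists 'I_5, 'I_5, GE; split; first exact: G_bic.
split; first exact: G_ncon.
move=> A' B' E' [oA [oB [iA [iB [cA cB]]]]] hcon [f [finj hf]].
pose V := (A' + B')%type.
pose adj := badj E'.
pose sd (v : V) : bool := if v is inl _ then true else false.
pose ord (v : V) : nat := match v with inl a => oA a | inr b => oB b end.
have Hc : forall v x y z, sd x = sd y -> sd y = sd z -> adj v x -> adj v z ->
    ord x <= ord y <= ord z -> adj v y.
  move=> [a|b] [x|x] [y|y] [z|z] //= _ _.
    exact: cA.
  exact: cB.
have Hi : forall x y, sd x = sd y -> ord x = ord y -> x = y.
  by move=> [x|x] [y|y] //= _ e; [rewrite (iA _ _ e) | rewrite (iB _ _ e)].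
have Hs : forall x y, adj x y -> sd x <> sd y by move=> [x|x] [y|y].
have Hsym : forall x y, adj x y = adj y x by move=> [x|x] [y|y].
pose N1 (v : V) := [exists k, inK k && ((f k == v) || adj (f k) v)].
pose R v := ~~ N1 v.
pose e' := [rel u v | [&& adj u v, R u & R v]].
have Rw : forall w, f w = f (inl w4) \/ f w = f (inr w4) -> R (f w).
  move=> w hw; apply/existsP => -[k /andP[hk /orP[/eqP h|h]]].
    have := finj _ _ h => ekw; case: hw => /finj ew; move: hk; rewrite ekw ew //.
  have [h1 h2] := K_w4 hk.
  by case: hw => /finj ew; move: h; rewrite /adj hf ew ?h1 ?h2.
have RW1 := Rw _ (or_introl erefl).
have RW2 := Rw _ (or_intror erefl).
pose C v := R v && connect e' (f (inl w4)) v.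
have CW1 : C (f (inl w4)) by rewrite /C RW1 connect0.
have nCu0 : ~~ C (f (inl i0)).
  rewrite /C /R negb_and negbK; apply/orP; left; apply/existsP; exists (inl i0).
  by rewrite eqxx.
have [x2 [x1 [Cx2 nCx1 a12]]] := cross (hcon (f (inl w4)) (f (inl i0))) CW1 nCu0.
case/andP: Cx2 => Rx2 cx2.
have Rx2' : forall k, inK k -> ~~ adj x2 (f k).
  move=> k hk; apply/negP => h; move/negP: Rx2; apply; apply/existsP; exists k.
  by rewrite hk Hsym h orbT.
have [k [hk hkx1]] : exists k, inK k /\ adj (f k) x1.
  have : ~~ R x1.
    apply/negP => Rx1; move/negP: nCx1; apply; rewrite /C Rx1 /=.
    apply: connect_trans cx2 (connect1 _); by apply/and3P; split.
  rewrite negbK => /existsP[k /andP[hk /orP[/eqP ekx|h]]]; last by exists k.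
  by exfalso; move: (Rx2' k hk); rewrite ekx => /negP; apply; exact: a12.
have [x3 [a23 Rx3]] : exists x3, adj x2 x3 /\ R x3.
  have se : connect_sym e'.
    apply: sym_connect_sym => u v; apply/idP/idP => /and3P[h1 h2 h3]; apply/and3P; split => //;
      move: h1; by case: u v {h2 h3} => [?|?] [?|?].
  move: cx2; rewrite se => /connectP[[|c p] /= pth lst].
    by exists (f (inr w4)); rewrite -lst; split; [rewrite /adj hf | exact: RW2].
  by case/andP: pth => /and3P[h _ Rc] _; exists c.
have Rx3' : forall k, inK k -> ~~ adj x3 (f k).
  move=> k' hk'; apply/negP => h; move/negP: Rx3; apply; apply/existsP; exists k'.
  by rewrite hk' Hsym h orbT.
have hfK : forall a b, adj (f a) (f b) = badj GE a b by move=> a b; rewrite /adj hf.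
have h12 : adj x1 x2 by rewrite Hsym.
move: hk hkx1; case: k => [[m Hm]|[m Hm]] hk h; rewrite Hsym in h.
  have hx1 : [|| adj x1 (f (inl i0)), adj x1 (f (inl i1)), adj x1 (f (inl i2)) | adj x1 (f (inl i3))].
    move: Hm hk h; case: m => [|[|[|[|m]]]] Hm //= _ h;
    by rewrite (eq_irrelevance Hm isT) in h; rewrite h ?orbT.
  apply: (core_false Hc Hi Hs Hsym (u0 := f (inl i0)) (u1 := f (inr i0)) (u2 := f (inl i1))
     (u3 := f (inr i1)) (v0 := f (inr i2)) (v1 := f (inl i2)) (v2 := f (inr i3)) (v3 := f (inl i3))
     (x1 := x1) (x2 := x2) (x3 := x3));
    first [ by rewrite hfK | by apply: Rx2' | by apply: Rx3' | done ].
have hx1 : [|| adj x1 (f (inr i0)), adj x1 (f (inr i1)), adj x1 (f (inr i3)) | adj x1 (f (inr i2))].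
  move: Hm hk h; case: m => [|[|[|[|m]]]] Hm //= _ h;
  by rewrite (eq_irrelevance Hm isT) in h; rewrite h ?orbT.
apply: (core_false Hc Hi Hs Hsym (u0 := f (inr i0)) (u1 := f (inl i1)) (u2 := f (inr i1))
   (u3 := f (inl i0)) (v0 := f (inl i2)) (v1 := f (inr i3)) (v2 := f (inl i3)) (v3 := f (inr i2))
   (x1 := x1) (x2 := x2) (x3 := x3));
  first [ by rewrite hfK | by apply: Rx2' | by apply: Rx3' | done ].
Qed.
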